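(* Let $\lambda>0$, $d_v>0$, $\epsilon\ge0$, $m=\lambda\pi d_v^2$, $k\ge0$, and let $\tilde{\mathbf x}_1,\dots,\tilde{\mathbf x}_k\in\mathbb R^2$ be given, with $f(\mathbf x)$ the set of their orderings. With $A_i=\mathbf b(\tilde{\mathbf x}_i,\epsilon)$ the closed Euclidean ball of radius $\epsilon$ about $\tilde{\mathbf x}_i$ and $|A_i|$ its Lebesgue measure, $$\mathbb P\big[\Delta_s(f(\mathbf x),F(\mathbf 0))\le\epsilon\big]\le m^k e^{-m}\prod_{i=1}^k\frac{|A_i|}{\pi d_v^2}.$$
   Context: Landmarks seen from the origin are the points of a homogeneous Poisson point process $\Phi_{\mathbf 0}$ of intensity $\lambda$ on $\mathbb R^2$; a landmark is visible from $\mathbf 0$ if its distance to $\mathbf 0$ is at most $d_v$, and $N_{\mathbf 0}$ is the number of visible landmarks. The random measurement $F(\mathbf 0)$ is the set of all $N_{\mathbf 0}\times 2$ matrices whose rows are the positions of the visible landmarks (relative to $\mathbf 0$) listed in some order; $f(\mathbf x)$ is the set of all $k\times2$ matrices whose rows are $\tilde{\mathbf x}_1,\dots,\tilde{\mathbf x}_k$ in some order. For matrices, $\Delta_v(\mathbf v,\mathbf w)=\max_i\|\mathbf v_{i,:}-\mathbf w_{i,:}\|_2$ if they have the same number of rows (equal to $0$ if both have zero rows) and $\infty$ otherwise; $\Delta_s(f,F)=\min_{\mathbf v\in f,\mathbf w\in F}\Delta_v(\mathbf v,\mathbf w)$. *)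

(* Defs.v *)
From HB Require Import structures.
From mathcomp Require Import all_boot all_order all_algebra.
From mathcomp Require Import all_classical all_reals all_analysis.
Set Implicit Arguments. Unset Strict Implicit. Unset Printing Implicit Defensive.
Import Order.TTheory GRing.Theory Num.Theory.
Import numFieldNormedType.Exports.
Local Open Scope classical_set_scope.
Local Open Scope ring_scope.

Section Landmarks.
Variable R : realType.

Definition dist2 (p q : R * R) : R :=
  Num.sqrt ((p.1 - q.1) ^+ 2 + (p.2 - q.2) ^+ 2).

Definition cball2 (c : R * R) (r : R) : set (R * R) :=
  [set p | dist2 p c <= r].

Definition leb2 : set (R * R) -> \bar R :=
  ((@lebesgue_measure R) \x (@lebesgue_measure R))%E.

(* A N x 2 matrix is represented by the sequence of its rows. *)
Definition Delta_v (v w : seq (R * R)) : \bar R :=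
  if size v == size w then
    ((\big[Num.max/0]_(i < size v) dist2 (nth (0, 0) v i) (nth (0, 0) w i))%:E)%E
  else (+oo)%E.

Definition orderings (s : seq (R * R)) : set (seq (R * R)) :=
  [set t | perm_eq t s].

(* Delta_s(f, F) = min over v in f, w in F of Delta_v(v, w)
   (the sets are finite, so the min is the infimum). *)
Definition Delta_s (f F : set (seq (R * R))) : \bar R :=
  ereal_inf [set Delta_v v w | v in f & w in F].

End Landmarks.

(* Main.v *)
Require Import Defs.
From HB Require Import structures.
From mathcomp Require Import all_boot all_order all_algebra.
From mathcomp Require Import all_classical all_reals all_analysis.
From mathcomp Require Import fingroup perm.
Import Order.TTheory GRing.Theory Num.Theory.
Import numFieldNormedType.Exports.
Local Open Scope classical_set_scope.
Local Open Scope ring_scope.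
Set Implicit Arguments. Unset Strict Implicit. Unset Printing Implicit Defensive.

Section Helpers.
Variable R : realType.
Implicit Types p q c : R * R.

Lemma dist2C p q : dist2 p q = dist2 q p.
Proof. by rewrite /dist2 -(sqrrN (p.1 - q.1)) -(sqrrN (p.2 - q.2)) !opprB. Qed.

Lemma measurable_dist2 c :
  measurable_fun setT (fun p : R * R => dist2 p c).
Proof.
rewrite /dist2.
change (measurable_fun setT (Num.sqrt \o
  (fun p : R * R => (p.1 - c.1) ^+ 2 + (p.2 - c.2) ^+ 2))).
apply: measurableT_comp.
  exact: measurable_realfun.continuous_measurable_fun (@sqrt_continuous R).
apply: measurable_realfun.measurable_funD; apply: measurable_realfun.measurable_funX;
  apply: measurable_realfun.measurable_funD; try apply: measurable_cst;
  [exact: measurable_fst | exact: measurable_snd].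
Qed.

Lemma measurable_cball2 c r : measurable (cball2 c r).
Proof.
have := @measurable_dist2 c measurableT _ (measurable_itv `]-oo, r]).
rewrite setTI; congr measurable; apply/seteqP; split => p /=;
  by rewrite /cball2 /= in_itv /=.
Qed.

End Helpers.
Section Helpers2.
Variable R : realType.

Definition Close (e : R) (v w : seq (R * R)) :=
  size v = size w /\
  forall i, (i < size v)%N -> dist2 (nth (0, 0) v i) (nth (0, 0) w i) <= e.

Lemma Delta_v_le (e : R) v w : 0 <= e ->
  (Delta_v v w <= e%:E)%E <-> Close e v w.
Proof.
move=> e0; rewrite /Delta_v /Close; case: eqP => [Hs|Hs]; last first.
  by rewrite leye_eq; split => // -[].
rewrite lee_fin; split.
  move=> H; split => // i Hi.
  apply: le_trans H.
  exact: (le_bigmax 0 (fun j : 'I_(size v) =>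
    dist2 (nth (0, 0) v j) (nth (0, 0) w j)) (Ordinal Hi)).
move=> [_ H]; apply: bigmax_le => // i _; exact: H.
Qed.

Definition Good (e : R) (a b : seq (R * R)) :=
  exists v w, [/\ perm_eq v a, perm_eq w b & Close e v w].

Lemma Delta_s_le (e : R) a b : 0 <= e ->
  (Delta_s (orderings a) (orderings b) <= e%:E)%E <-> Good e a b.
Proof.
move=> e0; split; last first.
  move=> [v [w [va wb C]]].
  apply: le_trans (ereal_inf_lbound _) _; first by exists v => //; exists w.
  exact/Delta_v_le.
move=> H; apply: contrapT => NG.
pose L := [seq Delta_v v w | v <- permutations a, w <- permutations b].
have : (e%:E < \big[Order.min/+oo%E]_(x <- L) x)%E.
  rewrite big_seq; apply: lt_bigmin => //; first exact: ltry.
  move=> x /allpairsP [[v w] /= [va wb ->]].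
  rewrite ltNge; apply/negP => /(Delta_v_le v w e0) C; apply: NG.
  by exists v, w; split => //; rewrite -mem_permutations.
apply/negP; rewrite -leNgt; apply: le_trans H.
apply: le_ereal_inf_tmp => _ [v va [w wb <-]].
have HL : Delta_v v w \in L by apply: allpairs_f; rewrite mem_permutations.
by rewrite big_seq; apply: (@ge_bigmin_seq _ _ _ _ _ (Delta_v v w)).
Qed.

End Helpers2.
Section Helpers3.
Variable R : realType.

Lemma Good_inv (e dv : R) (a : seq (R * R)) n (y y' : nat -> R * R) :
  (forall i, (i < n)%N ->
     (dist2 (y i) (0, 0) <= dv) = (dist2 (y' i) (0, 0) <= dv)) ->
  (forall i x, (i < n)%N -> x \in a ->
     (dist2 x (y i) <= e) = (dist2 x (y' i) <= e)) ->
  Good e a [seq y i | i <- iota 0 n & dist2 (y i) (0, 0) <= dv] ->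
  Good e a [seq y' i | i <- iota 0 n & dist2 (y' i) (0, 0) <= dv].
Proof.
move=> HD HA [v [w [va wb [sz C]]]].
set I := [seq i <- iota 0 n | dist2 (y i) (0, 0) <= dv] in wb.
have -> : [seq i <- iota 0 n | dist2 (y' i) (0, 0) <= dv] = I.
  by apply: eq_in_filter => i; rewrite mem_iota add0n => /andP[_ /HD].
have In i : i \in I -> (i < n)%N.
  by rewrite mem_filter mem_iota add0n => /andP[_ /andP[]].
move: wb => /(perm_iotaP (0, 0)) [Is Isp wE].
have Isl p : (p < size Is)%N -> (nth 0%N Is p < size I)%N.
  move=> Hp; have : nth 0%N Is p \in iota 0 (size [seq y i | i <- I]).
    by rewrite -(perm_mem Isp) mem_nth.
  by rewrite mem_iota size_map add0n.
exists v, [seq nth (0, 0) [seq y' i | i <- I] i | i <- Is]; split => //.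
  apply/(perm_iotaP (0, 0)); exists Is => //.
  by rewrite !size_map in Isp *.
split; first by rewrite sz wE !size_map.
move=> p Hp; have := C p Hp.
have HpI : (p < size Is)%N by rewrite -(size_map (nth (0, 0) [seq y i | i <- I])) -wE -sz.
rewrite wE !(nth_map 0%N) // ?(nth_map (0, 0)) ?size_map ?Isl //.

rewrite HA //; first by apply: In; rewrite mem_nth // Isl.
by rewrite -(perm_mem va) mem_nth.
Qed.

End Helpers3.
Section Pattern.
Variable R : realType.

Lemma pattern_measurable d (T : measurableType d) (n r : nat)
  (Z : nat -> T -> R * R) (C : nat -> set (R * R)) (Q : T -> Prop) :
  (forall i, measurable_fun setT (Z i)) -> (forall j, measurable (C j)) ->
  (forall w w', (forall i j, (i < n)%N -> (j < r)%N ->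
      (C j (Z i w) <-> C j (Z i w'))) -> Q w -> Q w') ->
  measurable [set w | Q w].
Proof.
move=> HZ HC HQ.
pose pat w : {ffun 'I_n * 'I_r -> bool} :=
  [ffun ij : 'I_n * 'I_r => `[< C ij.2 (Z ij.1 w) >]].
pose cell (pi : {ffun 'I_n * 'I_r -> bool}) :=
  \bigcap_(ij in [set: 'I_n * 'I_r])
     (if pi ij then Z ij.1 @^-1` C ij.2 else ~` (Z ij.1 @^-1` C ij.2)).
have cellE pi w : cell pi w <-> pat w = pi.
  split.
    move=> H; apply/ffunP => ij; rewrite ffunE; have := H ij I.
    case: (pi ij) => /= h; first exact/asboolP.
    exact/negbTE/asboolPn.
  move=> <- ij _; rewrite ffunE; case: asboolP => //.
have -> : [set w | Q w] =
    \bigcup_(pi in [set pi | exists w0, pat w0 = pi /\ Q w0]) cell pi.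
  apply/seteqP; split => w /=.
    by move=> Qw; exists (pat w); [exists w | exact/cellE].
  move=> [pi [w0 [<- Qw0]] /cellE Ew]; apply: (HQ w0) => // i j Hi Hj.
  move/ffunP: Ew => /(_ (Ordinal Hi, Ordinal Hj)).
  rewrite !ffunE /= => E.
  by split => h; apply/asboolP; [rewrite E | rewrite -E]; apply/asboolP.
apply: fin_bigcup_measurable; first exact: finite_finset.
move=> pi _; apply: fin_bigcap_measurable; first exact: finite_finset.
move=> ij _; have := HZ ij.1 measurableT _ (HC ij.2); rewrite setTI => h.
by case: ifP => _; [|apply: measurableC].
Qed.

End Pattern.
Lemma prod_le_ge0 (R : realType) (I : Type) (s : seq I) (f g : I -> \bar R) :
  (forall i, (0 <= f i)%E /\ (f i <= g i)%E) ->
  (0 <= \prod_(i <- s) f i)%E /\ (\prod_(i <- s) f i <= \prod_(i <- s) g i)%E.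
Proof.
move=> H; elim: s => [|x s [IH1 IH2]]; first by rewrite !big_nil.
have [h1 h2] := H x.
rewrite !big_cons; split; first exact: mule_ge0.
exact: lee_pmul.
Qed.

Lemma prod_le_ge0_ord (R : realType) (n : nat) (f g : 'I_n -> \bar R) :
  (forall i, (0 <= f i)%E /\ (f i <= g i)%E) ->
  (0 <= \prod_(i < n) f i)%E /\ (\prod_(i < n) f i <= \prod_(i < n) g i)%E.
Proof. exact: prod_le_ge0. Qed.

Lemma leb2_0 (R : realType) : @leb2 R set0 = 0%E.
Proof.
exact: (@measure0 _ _ _ ((@lebesgue_measure R \x @lebesgue_measure R)%E)).
Qed.

Lemma leb2_le (R : realType) (A B : set (R * R)) :
  measurable A -> measurable B -> A `<=` B -> (@leb2 R A <= @leb2 R B)%E.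
Proof.
move=> mA mB AB.
exact: (@le_measure _ _ _ ((@lebesgue_measure R \x @lebesgue_measure R)%E)
  A B (mem_set mA) (mem_set mB) AB).
Qed.

Lemma leb2_ge0 (R : realType) (A : set (R * R)) : (0 <= @leb2 R A)%E.
Proof.
exact: (@measure_ge0 _ _ _ ((@lebesgue_measure R \x @lebesgue_measure R)%E)).
Qed.

Theorem lemma8 (R : realType) (d : measure_display) (T : measurableType d)
  (P : probability T R) (lam dv eps : R) (N : T -> nat) (Y : nat -> T -> R * R)
  (xs : seq (R * R)) :
  0 < lam -> 0 < dv -> 0 <= eps ->
  (forall n, measurable [set w | N w = n]) ->
  (forall i, measurable_fun setT (Y i)) ->
  (forall (n : nat) (B : nat -> set (R * R)), (forall i, measurable (B i)) ->
     P ([set w | N w = n] `&` \bigcap_(i in [set i | (i < n)%N]) (Y i @^-1` B i))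
     = ((expR (- (lam * pi * dv ^+ 2)) / n`!%:R)%:E
         * \prod_(i < n) (lam%:E * leb2 (B i `&` cball2 (0%R : R, 0%R : R) dv)))%E) ->
  let m := lam * pi * dv ^+ 2 in
  let k := size xs in
  let F0 := fun w => orderings
              [seq Y i w | i <- iota 0 (N w) & dist2 (Y i w) (0%R : R, 0%R : R) <= dv] in
  (P [set w | (Delta_s (orderings xs) (F0 w) <= eps%:E)%E]
   <= (m ^+ k * expR (- m))%:E
      * \prod_(x <- xs) (leb2 (cball2 x eps) * ((pi * dv ^+ 2)^-1)%:E))%E.
Proof.
move=> lam0 dv0 eps0 mN mY Hjan; cbv beta zeta.
set m := lam * pi * dv ^+ 2; set k := size xs.
set D := cball2 (0%R : R, 0%R : R) dv.
have mD : measurable D by exact: measurable_cball2.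
set E := [set w | _].
have EE : E = \bigcup_n ([set w | N w = n] `&`
   [set w | Good eps xs [seq Y i w | i <- iota 0 n & dist2 (Y i w) (0, 0) <= dv]]).
  apply/seteqP; split => w /=.
    by move=> /(Delta_s_le _ _ eps0) G; exists (N w).
  by move=> [n _ [<- G]]; apply/Delta_s_le.
have mE : measurable E.
  rewrite EE; apply: bigcupT_measurable => n; apply: measurableI => //.
  apply: (@pattern_measurable R _ _ n (size xs).+1 Y
    (fun j => if j is j'.+1 then cball2 (nth (0, 0) xs j') eps else D)) => //.
    by case => [|j]; exact: measurable_cball2.
  move=> w w' H; apply: Good_inv.
    move=> i Hi; have [h1 h2] := H i 0%N Hi erefl.
    by apply/idP/idP => [/h1|/h2].
  move=> i x Hi xin.
  have Hj : (index x xs < size xs)%N by rewrite index_mem.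
  have [h1 h2] := H i (index x xs).+1 Hi Hj.
  move: h1 h2; rewrite /cball2 /= nth_index // !(dist2C (Y i _)) => h1 h2.
  by apply/idP/idP => [/h1|/h2].
pose BadF n i := if (i < n)%N then [set w | N w = n] `&` (Y i @^-1` ~` D)
                 else set0.
have mBadF n i : measurable (BadF n i).
  rewrite /BadF; case: ifP => // _; apply: measurableI => //.
  by rewrite -[X in measurable X]setTI; apply: (mY i measurableT); apply: measurableC.
have PBadF n i : P (BadF n i) = 0%E.
  rewrite /BadF; case: ifP => Hi; last exact: measure0.
  pose B j := if j == i then ~` D else setT.
  have mB j : measurable (B j) by rewrite /B; case: ifP => _ //; apply: measurableC.
  have := Hjan n B mB.
  have -> : [set w | N w = n] `&` \bigcap_(j in [set j | (j < n)%N]) (Y j @^-1` B j)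
      = [set w | N w = n] `&` (Y i @^-1` ~` D).
    apply/seteqP; split => w /= [Nw H]; split => //.
      by have := H i Hi; rewrite /B eqxx.
    by move=> j _; rewrite /B; case: eqP => [->|].
  move=> ->; rewrite (bigD1 (Ordinal Hi)) //= /B eqxx.
  have -> : (~` D `&` cball2 (0%R : R, 0%R : R) dv) = set0 by rewrite setICl.
  by rewrite leb2_0 mule0 mul0e mule0.
pose Bad := \bigcup_n \bigcup_i BadF n i.
have mBad : measurable Bad by do 2 apply: bigcupT_measurable => ?.
have PBad : P Bad = 0%E.
  apply: (proj1 (negligibleP P mBad)); apply: negligible_bigcup => n.
  apply: negligible_bigcup => i.
  exact: (proj2 (negligibleP P (mBadF n i)) (PBadF n i)).
pose sk := enum {perm 'I_k}.
pose Bs (s : {perm 'I_k}) (i : nat) : set (R * R) :=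
  if (insub i : option 'I_k) is Some o then cball2 (nth (0, 0) xs (s o)) eps
  else setT.
have mBs s i : measurable (Bs s i).
  rewrite /Bs; case: insub; last by []; move=> o; exact: measurable_cball2.
pose G s := [set w | N w = k] `&`
  \bigcap_(i in [set i | (i < k)%N]) (Y i @^-1` Bs s i).
have mG s : measurable (G s).
  apply: measurableI => //; apply: bigcap_measurableType => i _.
  by rewrite -[X in measurable X]setTI; apply: (mY i measurableT).
pose nq := size sk.
pose GF q := G (nth 1%g sk q).
pose U := \big[setU/set0]_(q < nq) GF q.
have mU : measurable U by apply: bigsetU_measurable => q _; exact: mG.
have incl : E `<=` Bad `|` U.
  move=> w Ew.
  case: (pselect (exists2 i, (i < N w)%N & ~ D (Y i w))) => [[i Hi nD]|nB].
    left; exists (N w) => //; exists i => //; rewrite /BadF Hi; split => //.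
  right.
  have hall i : (i < N w)%N -> dist2 (Y i w) (0, 0) <= dv.
    by move=> Hi; apply: contrapT => h; apply: nB; exists i.
  move: Ew; rewrite /E /= => /(Delta_s_le _ _ eps0).
  rewrite (@eq_in_filter _ _ predT); last first.
    by move=> i; rewrite mem_iota add0n => /andP[_ /hall] ->.
  rewrite filter_predT.
  move=> [v [w' [va wb [sz C]]]].
  set L := [seq Y i w | i <- iota 0 (N w)] in wb.
  have szv : size v = k by rewrite (perm_size va).
  have szL : size L = N w by rewrite size_map size_iota.
  have Nk : N w = k by rewrite -szL -(perm_size wb) -sz szv.
  move: va => /(perm_iotaP (0, 0)) [Iv Ivp vE].
  move: wb => /(perm_iotaP (0, 0)) [Iw Iwp wE].
  have sIv : size Iv = k by rewrite (perm_size Ivp) size_iota.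
  have sIw : size Iw = k by rewrite (perm_size Iwp) size_iota szL.
  have uIv : uniq Iv by rewrite (perm_uniq Ivp) iota_uniq.
  have memIw (i : 'I_k) : val i \in Iw.
    by rewrite (perm_mem Iwp) mem_iota szL Nk add0n ltn_ord.
  have ltIv p : (p < k)%N -> (nth 0%N Iv p < k)%N.
    move=> Hp; have : nth 0%N Iv p \in iota 0 (size xs).
      by rewrite -(perm_mem Ivp) mem_nth // sIv.
    by rewrite mem_iota add0n.
  have Hidx (i : 'I_k) : (index (val i) Iw < k)%N.
    by have := memIw i; rewrite -index_mem sIw.
  pose f (i : 'I_k) : 'I_k := insubd i (nth 0%N Iv (index (val i) Iw)).
  have fE i : val (f i) = nth 0%N Iv (index (val i) Iw).
    by rewrite val_insubd ltIv.
  have finj : injective f.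
    move=> i j /(congr1 val); rewrite !fE => /eqP.
    rewrite nth_uniq ?sIv // => /eqP h.
    by apply: val_inj; rewrite -(nth_index 0%N (memIw i)) h nth_index.
  pose s := perm finj.
  rewrite /U -bigcup_mkord; exists (index s sk) => /=.
    by rewrite index_mem /sk mem_enum.
  rewrite /GF nth_index ?mem_enum //; split => //.
  move=> i /= Hi; rewrite /Bs; case: insubP => [u _ uE | ]; last by rewrite Hi.
  rewrite /cball2 /= permE dist2C.
  have := C (index (val u) Iw); rewrite szv Hidx => /(_ erefl).
  rewrite vE wE (nth_map 0%N) ?sIv ?Hidx // (nth_map 0%N) ?sIw ?Hidx //.
  rewrite nth_index ?memIw // -fE.
  rewrite /L (nth_map 0%N) ?size_iota ?Nk ?ltn_ord // nth_iota ?Nk ?ltn_ord //= uE.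
  by move=> h; exact: h.
have step1 : (P E <= P U)%E.
  have h1 := le_measure P (mem_set mE) (mem_set (measurableU _ _ mBad mU)) incl.
  apply: le_trans h1 _.
  apply: le_trans (measureU2 P mBad mU) _.
  apply: (@le_trans _ _ (0 + P U)%E); last by rewrite add0e.
  rewrite le_eqVlt; apply/orP; left; apply/eqP; congr (_ + _)%E; exact: PBad.
pose c := expR (- m) / k`!%:R.
pose x0 : R * R := (0, 0).
pose Pi0 := (\prod_(j < k) (lam%:E * leb2 (cball2 (nth x0 xs j) eps)))%E.
have Pi0_ge0 : (0 <= Pi0)%E.
  by apply: prode_ge0 => j _; apply: mule_ge0; [rewrite lee_fin; exact: ltW|apply: leb2_ge0].
have c0 : 0 <= c by rewrite divr_ge0 // expR_ge0.
have PG s : (P (G s) <= c%:E * Pi0)%E.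
  rewrite /G Hjan // -/m -/c; apply: lee_wpmul2l; first by rewrite lee_fin.
  rewrite /Pi0 [leRHS](reindex_inj (@perm_inj _ s)) /=.
  apply: (fun H => proj2 (prod_le_ge0_ord H)) => i; split.
    by apply: mule_ge0; [rewrite lee_fin; exact: ltW|apply: leb2_ge0].
  apply: lee_wpmul2l; first by rewrite lee_fin; exact: ltW.
  rewrite /Bs valK; apply: leb2_le.
  - by apply: measurableI; exact: measurable_cball2.
  - exact: measurable_cball2.
  - exact: subIsetl.
have step2 : (P U <= \sum_(q < nq) P (GF q))%E.
  exact: (@content_subadditive _ _ _ P U GF nq (fun q _ => mG _) mU (@subset_refl _ _)).
have step3 : (\sum_(q < nq) P (GF q) <= (expR (- m))%:E * Pi0)%E.
  apply: le_trans (lee_sum _ (fun (q : 'I_nq) _ => PG (nth 1%g sk q))) _.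
  rewrite -ge0_sume_distrl; last by move=> q _; rewrite lee_fin.
  rewrite sumEFin sumr_const card_ord /nq /sk -cardE perm.card_Sn.
  rewrite /c -(mulr_natr (expR (- m) / k`!%:R)) divfK // pnatr_eq0 -lt0n; exact: fact_gt0.
apply: le_trans step1 _; apply: le_trans step2 _; apply: le_trans step3 _.
rewrite le_eqVlt; apply/orP; left; apply/eqP.
rewrite (big_nth x0) big_mkord -/k.
rewrite EFinM.
have -> : (m ^+ k)%:E = (\prod_(j < k) m%:E)%E by rewrite prodEFin prodr_const card_ord.
rewrite (muleC _ (expR _)%:E) -muleA -big_split /=.
congr (_ * _)%E; apply: eq_bigr => j _.
rewrite muleCA -EFinM muleC; congr (_ * _)%E; congr EFin.
rewrite /m -mulrA mulfK //; apply: lt0r_neq0; apply: mulr_gt0; first exact: pi_gt0.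
exact: exprn_gt0.
Qed.
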